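(* (a) The map $S\mapsto C(S)$ is a bijection from the set of subsets of $[n]=\{1,\dots,n\}$ to the set of chambers of $I(\mathfrak{gl}_n,V\oplus\bigwedge^2)$; in particular this arrangement has $2^n$ chambers. (b) For $S\subseteq[n]$ and $1\le\ell\le n$ let $\pi_\ell^S=|S\cap[n-\ell+1,\infty)|$ and \[ e_\ell^S=(\underbrace{1,\dots,1}_{\pi_\ell^S},\underbrace{0,\dots,0}_{n-\ell},\underbrace{-1,\dots,-1}_{\ell-\pi_\ell^S})\in\mathbb{R}^n. \] Then the extreme rays of $C(S)$ are the rays generated by $e_1^S,\dots,e_n^S$, and $e_1^S,\dots,e_n^S$ non-negatively span $C(S)$. In particular every chamber is a simplicial cone (the arrangement is simplicial).
   Context: Identify the diagonal Cartan subalgebra of $\mathfrak{gl}_n$ with $\mathbb{R}^n$ with coordinates $x_1,\dots,x_n$. Let $W=\{x_1\ge\cdots\ge x_n\}$ and $W^0=\{x_1>\cdots>x_n\}$. For $1\le i\le j\le n$ let $\lambda_{i,j}^\perp$ be the hyperplane $x_i+x_j=0$ (for $i=j$: $x_i=0$); $I(\mathfrak{gl}_n,V\oplus\bigwedge^2)$ is the arrangement of these hyperplanes restricted to $W$. Chambers are the closures of the connected components of $W^0\setminus\bigcup\lambda_{i,j}^\perp$; a face is a chamber or the intersection of a chamber with a supporting hyperplane; an extreme ray is a face that is a half-line. For $S=\{a_1>a_2>\cdots>a_k\}\subseteq[n]$, $C(S)$ is the subset of $W$ on which, for all $1\le i\le j\le n$: $x_i+x_j\ge0$ if $i\le k$ and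 $j\le i+a_i-1$, and $x_i+x_j\le0$ otherwise (equivalently, in the right-justified tableau of signs of $x_i+x_j$, row $i$ has exactly $a_i$ plus signs for $i\le k$ and none for $i>k$). *)

(* Defs.v *)
(* R^n is 'rV[R]_n, coordinate x_(i+1) is x ord0 i. *)
From mathcomp Require Import all_boot all_order all_algebra.
From mathcomp Require Import all_classical all_reals all_analysis.
Import numFieldNormedType.Exports.
Set Implicit Arguments. Unset Strict Implicit. Unset Printing Implicit Defensive.
Import Order.TTheory GRing.Theory Num.Theory.
Local Open Scope classical_set_scope.
Local Open Scope ring_scope.

Section Arrangement.
Variables (R : realType) (n : nat).
Local Notation vec := 'rV[R]_n.

Definition crd (x : vec) (i : 'I_n) : R := x ord0 i.

Definition Wc : set vec :=
  [set x | forall i j : 'I_n, (i <= j)%N -> crd x j <= crd x i].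
Definition W0 : set vec :=
  [set x | forall i j : 'I_n, (i < j)%N -> crd x j < crd x i].

(* hyperplane lambda_{i,j}^perp : x_i + x_j = 0 (for i = j : x_i = 0, which is
   the same as 2 x_i = 0) *)
Definition lam_perp (i j : 'I_n) : set vec := [set x | crd x i + crd x j = 0].

Definition arr_union : set vec :=
  [set x | exists i j : 'I_n, (i <= j)%N /\ lam_perp i j x].

Definition W0_compl : set vec := W0 `\` arr_union.

Definition is_chamber (K : set vec) : Prop :=
  exists2 x, W0_compl x &
    K = @closure vec (@connected_component vec W0_compl x).

(* S subset of [n] is encoded as S : {set 'I_n}, the 0-based i standing for i+1.
   desc S = [:: a_1; a_2; ...; a_k]  with a_1 > a_2 > ... > a_k (1-based values). *)
Definition desc (S : {set 'I_n}) : seq nat :=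
  sort geq [seq (val i).+1 | i <- enum S].

(* a_i for the 0-based row index i (i.e. a_{i+1}) *)
Definition aS (S : {set 'I_n}) (i : nat) : nat := nth 0%N (desc S) i.

(* C(S): for 1 <= i <= j <= n, x_i + x_j >= 0 if i <= k and j <= i + a_i - 1,
   and x_i + x_j <= 0 otherwise.  In 0-based indices i0 = i-1, j0 = j-1:
   i <= k  <->  i0 < k,   j <= i + a_i - 1  <->  j0 < i0 + a_i. *)
Definition CS (S : {set 'I_n}) : set vec :=
  [set x | Wc x /\
    forall i j : 'I_n, (i <= j)%N ->
      if ((i < #|S|)%N && (j < i + aS S i)%N)
      then 0 <= crd x i + crd x j
      else crd x i + crd x j <= 0].

Definition piS (S : {set 'I_n}) (l : nat) : nat :=
  #|[set s in S | (n - l + 1 <= (val s).+1)%N]|.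

Definition eS (S : {set 'I_n}) (l : nat) : vec :=
  \row_(m < n) (if (m < piS S l)%N then 1
                else if (m < piS S l + (n - l))%N then 0 else -1).

Definition dotv (f x : vec) : R := \sum_(i < n) crd f i * crd x i.

Definition supporting (C : set vec) (f : vec) (c : R) : Prop :=
  f != 0 /\ (forall x, C x -> dotv f x <= c) /\ (exists x, C x /\ dotv f x = c).

Definition is_face (K F : set vec) : Prop :=
  F = K \/ exists f c, supporting K f c /\ F = K `&` [set x | dotv f x = c].

Definition is_halfline (F : set vec) : Prop :=
  exists p v : vec, v != 0 /\ F = [set p + t *: v | t in [set t : R | 0 <= t]].

Definition ray (v : vec) : set vec := [set t *: v | t in [set t : R | 0 <= t]].

Definition extreme_ray (K F : set vec) : Prop := is_face K F /\ is_halfline F.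

End Arrangement.

(* Main.v *)
Require Import Defs.
From mathcomp Require Import all_boot all_order all_algebra.
From mathcomp Require Import all_classical all_reals all_analysis.
From mathcomp Require Import zify lra.
Import numFieldNormedType.Exports.
Import Order.TTheory GRing.Theory Num.Theory.
Set Implicit Arguments. Unset Strict Implicit. Unset Printing Implicit Defensive.

Section Comb.
Variables (n : nat) (S : {set 'I_n}).

Definition fS (a : nat) : bool := [exists s : 'I_n, (s \in S) && (val s == a)].
Definition cS (a : nat) : nat := count fS (iota 0 a).

Lemma fS_val (u : 'I_n) : fS u = (u \in S).
Proof.
apply/existsP/idP => [[s /andP[sS /eqP /val_inj <-]] //|uS].
by exists u; rewrite uS eqxx.
Qed.

Lemma cS_step a : cS a.+1 = cS a + fS a.
Proof. by rewrite /cS -addn1 iotaD count_cat /= addn0. Qed.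

Lemma cS_le a : cS a <= a.
Proof. by rewrite /cS (leq_trans (count_size _ _)) // size_iota. Qed.

Lemma cS_split a b : cS (a + b) = cS a + count fS (iota a b).
Proof. by rewrite /cS iotaD count_cat. Qed.

Lemma cS_mono a b : a <= b -> cS a <= cS b /\ cS b <= cS a + (b - a).
Proof.
move=> ab; rewrite -(subnKC ab) cS_split; split; first exact: leq_addr.
by rewrite leq_add2l (leq_trans (count_size _ _)) // size_iota addKn.
Qed.

Lemma card_setq (q : pred nat) :
  #|[set s in S | q (val s)]| = count (fun a => fS a && q a) (iota 0 n).
Proof.
rewrite -val_enum_ord count_map cardE /enum_mem size_filter.
rewrite (@eq_filter _ _ predT) // filter_predT; apply: eq_count => i /=; by rewrite inE fS_val.
Qed.

Lemma cardS_cS : #|S| = cS n.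
Proof.
have -> : S = [set s in S | predT (val s)] by apply/setP => i; rewrite !inE andbT.
by rewrite card_setq /cS; apply: eq_count => a; rewrite andbT.
Qed.

Lemma card_ge m : m <= n -> #|[set s in S | m <= val s]| = cS n - cS m.
Proof.
move=> mn; rewrite card_setq -(subnKC mn) iotaD count_cat /= cS_split.
rewrite (@eq_in_count _ _ pred0); last first.
  move=> a; rewrite mem_iota add0n /= => h; by rewrite leqNgt h andbF.
rewrite count_pred0 add0n addKn; apply: eq_in_count => a.
by rewrite mem_iota => /andP[h _]; rewrite h andbT.
Qed.

Lemma card_gt (u : nat) : u < n -> #|[set s in S | u < val s]| = cS n - cS u.+1.
Proof. exact: card_ge. Qed.

Definition pos (u : 'I_n) : nat :=
  if u \in S then cS n - cS u.+1 else cS n + u - cS u.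

Lemma pos_lt u : pos u < n.
Proof.
have un := ltn_ord u.
have [h1 h2] := cS_mono un; have h3 := cS_step u; have h4 := cS_le u.
rewrite /pos; rewrite fS_val in h3; case: (u \in S) h3 => /= h3; lia.
Qed.

Definition posO (u : 'I_n) : 'I_n := Ordinal (pos_lt u).

Lemma pos_ltk u : (pos u < cS n) = (u \in S).
Proof.
have un := ltn_ord u.
have [h1 h2] := cS_mono un; have h3 := cS_step u; have h4 := cS_le u.
rewrite /pos; rewrite fS_val in h3; case: (u \in S) h3 => /= h3; lia.
Qed.

Lemma pos_facts (u v : 'I_n) : u < v ->
  [/\ cS u.+1 = cS u + (u \in S), cS v.+1 = cS v + (v \in S),
      cS u.+1 <= cS v, cS v <= cS u.+1 + (v - u.+1) & cS v.+1 <= cS n].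
Proof.
move=> uv; have [h1 h2] := cS_mono uv.
have [h5 h6] := cS_mono (ltn_ord v).
by split => //; rewrite cS_step fS_val.
Qed.

Lemma pos_neq (u v : 'I_n) : u < v -> pos u != pos v.
Proof.
move=> uv; have [h1 h2 h3 h4 h5] := pos_facts uv.
have h6 := cS_le u; have h7 := cS_le v.
rewrite /pos; case: (u \in S) h1; case: (v \in S) h2 => /= h2 h1; lia.
Qed.

Lemma pos_inj : injective posO.
Proof.
move=> u v /(congr1 val) /= e; apply: val_inj.
case: (ltngtP u v) => [h|h|//].
- by have := pos_neq h; rewrite e eqxx.
- by have := pos_neq h; rewrite e eqxx.
Qed.

Lemma pos_leS (u v : 'I_n) : u \in S -> v \in S -> (pos u <= pos v) = (v <= u).
Proof.
move=> uS vS; case: (ltngtP u v) => [uv|vu|/val_inj ->]; last by rewrite leqnn.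
- have [h1 h2 h3 h4 h5] := pos_facts uv; rewrite /pos uS vS in h1 h2 *; lia.
- have [h1 h2 h3 h4 h5] := pos_facts vu; rewrite /pos uS vS in h1 h2 *; lia.
Qed.

Lemma pos_leN (u v : 'I_n) : u \notin S -> v \notin S -> (pos u <= pos v) = (u <= v).
Proof.
move=> /negbTE uS /negbTE vS.
have h6 := cS_le u; have h7 := cS_le v.
case: (ltngtP u v) => [uv|vu|/val_inj ->]; last by rewrite leqnn.
- have [h1 h2 h3 h4 h5] := pos_facts uv; rewrite /pos uS vS in h1 h2 *; lia.
- have [h1 h2 h3 h4 h5] := pos_facts vu; rewrite /pos uS vS in h1 h2 *; lia.
Qed.


Definition desc' : seq nat := sort geq [seq (val i).+1 | i <- enum S].
Definition aS' (i : nat) : nat := nth 0 desc' i.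

Lemma index_sorted (s : seq nat) x : sorted geq s -> uniq s -> x \in s ->
  index x s = count (fun y => x < y) s.
Proof.
elim: s => [//|a s IH] /= srt /andP[aNs us].
have srt' : sorted geq s := path_sorted srt.
have tr : transitive geq by move=> a1 b1 c1 h1 h2; exact: leq_trans h2 h1.
have all_le : all (geq a) s by exact: order_path_min tr srt.
rewrite in_cons => /orP[/eqP ->|xs]; first rewrite eqxx /=.
  rewrite ltnn add0n; apply/esym/eqP; rewrite -leqn0 leqNgt -has_count; apply/negP.
  case/hasP => y ys /= ay; move/allP: all_le => /(_ y ys) /= ya.
  by have := leq_trans ay ya; rewrite ltnn.
have xa : x != a by apply: contraNneq aNs => <-.
rewrite eq_sym (negbTE xa) IH //.
have : x <= a by move/allP: all_le => /(_ x xs).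
by rewrite leq_eqVlt (negbTE xa) /= => ->.
Qed.

Lemma count_enumS (p : pred 'I_n) : count p (enum S) = #|[set s in S | p s]|.
Proof.
rewrite cardE /enum_mem size_filter /= count_filter; apply: eq_count => i.
by rewrite !inE andbC.
Qed.

Lemma size_desc : size desc' = #|S|.
Proof. by rewrite /desc' size_sort size_map cardE. Qed.

Lemma aS_pos (u : 'I_n) : u \in S -> aS' (pos u) = u.+1.
Proof.
move=> uS; rewrite /aS' /pos uS.
have mem : u.+1 \in desc' by rewrite /desc' mem_sort; apply: map_f; rewrite mem_enum.
have srt : sorted geq desc' by apply: sort_sorted => a b; apply: leq_total.
have uq : uniq desc'.
  by rewrite /desc' sort_uniq map_inj_uniq ?enum_uniq // => a b /= [] /val_inj.
suff -> : cS n - cS u.+1 = index u.+1 desc' by rewrite nth_index.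
rewrite index_sorted // /desc'.
rewrite (permP (permEl (perm_sort _ _))) count_map count_enumS /= -card_gt //.

Qed.

Lemma P_pos (u v : 'I_n) : pos u <= pos v ->
  (pos u < #|S|) && (pos v < pos u + aS' (pos u)) = (u \in S) && (v <= u).
Proof.
move=> uv; rewrite cardS_cS pos_ltk.
case uS: (u \in S) => //=; rewrite aS_pos //.
have u1n := ltn_ord u.
case vS: (v \in S).
  have vu : v <= u by rewrite -pos_leS.
  rewrite vu; move: vu; rewrite leq_eqVlt => /orP[/eqP/val_inj->|vu]; first lia.
  have [h1 h2 h3 h4 h5] := pos_facts vu.
  rewrite /pos uS vS in uv *; rewrite uS vS /= in h1 h2; lia.
have h6 := cS_le v.
case: (ltngtP u v) => [uv'|vu|/val_inj e]; last by rewrite -e uS in vS.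
- have [h1 h2 h3 h4 h5] := pos_facts uv'.
  rewrite /pos uS vS in uv *; rewrite uS vS /= in h1 h2; lia.
- have [h1 h2 h3 h4 h5] := pos_facts vu.
  rewrite /pos uS vS in uv *; rewrite uS vS /= in h1 h2; lia.
Qed.

Lemma posO_surj (i : 'I_n) : exists u, i = posO u.
Proof. by exists (invF pos_inj i); rewrite f_invF. Qed.


Lemma piS_eq (l : nat) :
  #|[set s in S | (n - l + 1 <= (val s).+1)%N]| = cS n - cS (n - l).
Proof.
rewrite -card_ge ?leq_subr //; apply: eq_card => s; by rewrite !inE addn1 ltnS.
Qed.

Lemma eS_nat1 (u : 'I_n) (m : nat) : m <= n ->
  (pos u < cS n - cS m) = (u \in S) && (m <= u).
Proof.
move=> mn; have un := ltn_ord u; have [h1 h2] := cS_mono mn.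
have h3 := cS_step u; rewrite fS_val in h3; have h4 := cS_le u; have h5 := cS_le m.
have [h6 h7] := cS_mono un.
rewrite /pos; case uS: (u \in S) h3 => /= h3; last lia.
case: (leqP m u) => mu.
  have [h8 h9] := cS_mono mu; lia.
have [h8 h9] := cS_mono mu; lia.
Qed.

Lemma eS_nat2 (u : 'I_n) (m : nat) : m <= n ->
  (pos u < cS n - cS m + m) = (u \in S) || (u < m).
Proof.
move=> mn; have un := ltn_ord u; have [h1 h2] := cS_mono mn.
have h3 := cS_step u; rewrite fS_val in h3; have h4 := cS_le u; have h5 := cS_le m.
have [h6 h7] := cS_mono un.
rewrite /pos; case uS: (u \in S) h3 => /= h3; first lia.
case: (leqP m u) => mu.
  have [h8 h9] := cS_mono mu; lia.
have [h8 h9] := cS_mono mu; lia.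
Qed.


Lemma aS_bounds (i : nat) : (i < #|S|)%N -> (1 <= aS' i)%N /\ (i + aS' i <= n)%N.
Proof.
move=> ik; have Sn : (#|S| <= n)%N by rewrite -[X in (_ <= X)%N](card_ord n) max_card.
have i_n : (i < n)%N by rewrite (leq_trans ik).
have [u hu] := posO_surj (Ordinal i_n).
have ie : i = pos u by move/(congr1 val): hu.
have uS : u \in S by rewrite -pos_ltk -cardS_cS -ie.
rewrite ie aS_pos //; split => //.
have un := ltn_ord u; have [h1 h2] := cS_mono un.
rewrite /pos uS; have := cS_le u.+1; lia.
Qed.

Lemma mem_desc (s : 'I_n) : (s \in S) = ((val s).+1 \in desc').
Proof.
rewrite /desc' mem_sort; apply/idP/mapP => [sS|[t]]; first by exists s; rewrite ?mem_enum.
by rewrite mem_enum => tS [] /val_inj ->.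
Qed.

End Comb.

Definition Pc n (S : {set 'I_n}) (i j : nat) : bool :=
  (i < #|S|)%N && (j < i + aS' S i)%N.

Lemma Pc_card n (A B : {set 'I_n}) :
  (forall i j : 'I_n, (i <= j)%N -> Pc A i j = Pc B i j) -> (#|A| <= #|B|)%N.
Proof.
move=> h; rewrite leqNgt; apply/negP => BA.
have An : (#|A| <= n)%N by rewrite -[X in (_ <= X)%N](card_ord n) max_card.
have Bn : (#|B| < n)%N by rewrite (leq_trans BA).
have := h (Ordinal Bn) (Ordinal Bn) (leqnn _); rewrite /Pc /= BA ltnn /=.
have [h1 _] := aS_bounds BA; rewrite -[X in (X < _)%N]addn0 ltn_add2l h1 //.
Qed.

Lemma Pc_aS n (A B : {set 'I_n}) (i : nat) :
  (forall i j : 'I_n, (i <= j)%N -> Pc A i j = Pc B i j) ->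
  (i < #|A|)%N -> (aS' A i <= aS' B i)%N.
Proof.
move=> h iA; have [h1 h2] := aS_bounds iA.
have jn : ((i + aS' A i).-1 < n)%N by lia.
have iN : (i < n)%N by lia.
have := h (Ordinal iN) (Ordinal jn); rewrite /Pc /= iA /=.
have -> : ((i + aS' A i).-1 < i + aS' A i)%N by lia.
move=> /(_ ltac:(lia)) /esym /andP[_]; lia.
Qed.

Lemma Pc_inj n (A B : {set 'I_n}) :
  (forall i j : 'I_n, (i <= j)%N -> Pc A i j = Pc B i j) -> A = B.
Proof.
move=> h.
have h' : forall i j : 'I_n, (i <= j)%N -> Pc B i j = Pc A i j by move=> i j ij; rewrite h.
have kAB : #|A| = #|B| by apply/eqP; rewrite eqn_leq !Pc_card.
have dAB : desc' A = desc' B.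
  apply: (@eq_from_nth _ 0); first by rewrite !size_desc.
  move=> i; rewrite size_desc => iA.
  have iB : (i < #|B|)%N by rewrite -kAB.
  by apply/eqP; rewrite eqn_leq (Pc_aS h iA) (Pc_aS h' iB).
by apply/setP => s; rewrite mem_desc dAB -mem_desc.
Qed.

Local Open Scope classical_set_scope.
Local Open Scope ring_scope.

Section Geo.
Variables (R : realType) (n : nat) (S : {set 'I_n}).
Local Notation vec := 'rV[R]_n.

Definition ind (b : bool) : R := if b then 1 else 0.
Definition sg (u : 'I_n) : R := if u \in S then 1 else -1.
Definition yv (x : vec) (u : 'I_n) : R := sg u * crd x (posO S u).
Definition predO (w : 'I_n) : 'I_n := Ordinal (leq_ltn_trans (leq_pred w) (ltn_ord w)).
Definition phi (x : vec) (w : 'I_n) : R :=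
  yv x w - (if (0 < w)%N then yv x (predO w) else 0).
Definition Phi (l : 'I_n) (x : vec) : R := phi x (rev_ord l).
Definition ee (l : 'I_n) : vec := @eS R n S l.+1.

Lemma crd_posS x u : u \in S -> crd x (posO S u) = yv x u.
Proof. by move=> uS; rewrite /yv /sg uS mul1r. Qed.

Lemma crd_posN x u : u \notin S -> crd x (posO S u) = - yv x u.
Proof. by move=> /negbTE uS; rewrite /yv /sg uS mulN1r opprK. Qed.

Lemma crd_pos x u : crd x (posO S u) = if u \in S then yv x u else - yv x u.
Proof. by case uS: (u \in S); [rewrite crd_posS | rewrite crd_posN ?uS]. Qed.

Lemma yvD x z u : yv (x + z) u = yv x u + yv z u.
Proof. by rewrite /yv /crd mxE mulrDr. Qed.

Lemma yvZ t x u : yv (t *: x) u = t * yv x u.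
Proof. by rewrite /yv /crd mxE mulrCA. Qed.

Lemma yv_sum (I : finType) (F : I -> vec) u :
  yv (\sum_i F i) u = \sum_i yv (F i) u.
Proof. by rewrite /yv /crd summxE mulr_sumr. Qed.

Lemma yv_ee l u : yv (ee l) u = ind (n - l.+1 <= u)%N.
Proof.
rewrite /yv /crd /ee /eS mxE /piS piS_eq.
have mn : (n - l.+1 <= n)%N by exact: leq_subr.
rewrite [X in (X < _)%N]/= eS_nat1 // eS_nat2 // /ind /sg.
by case: (u \in S); case: (leqP (n - l.+1) u) => _ /=; rewrite ?mulr1 ?mulr0 ?mulrN1 ?opprK.
Qed.


Lemma phiD x z w : phi (x + z) w = phi x w + phi z w.
Proof. rewrite /phi !yvD; case: ifP => _; rewrite ?yvD; lra. Qed.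

Lemma phiZ t x w : phi (t *: x) w = t * phi x w.
Proof. rewrite /phi !yvZ; case: ifP => _; rewrite ?yvZ; lra. Qed.

Lemma PhiD l x z : Phi l (x + z) = Phi l x + Phi l z.
Proof. exact: phiD. Qed.

Lemma PhiZ l t x : Phi l (t *: x) = t * Phi l x.
Proof. exact: phiZ. Qed.

Lemma Phi0 l : Phi l 0 = 0.
Proof. by have := PhiZ l 0 0; rewrite scale0r mul0r. Qed.

Lemma Phi_sum (I : finType) (P : pred I) (F : I -> vec) l :
  Phi l (\sum_(i | P i) F i) = \sum_(i | P i) Phi l (F i).
Proof. exact: (big_morph (Phi l) (PhiD l) (Phi0 l)). Qed.

Lemma Phi_ee l m : Phi m (ee l) = ind (m == l).
Proof.
rewrite /Phi /phi !yv_ee /=.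
have hm := ltn_ord m; have hl := ltn_ord l.
have -> : (m == l) = (val m == val l) by [].
rewrite /ind; case: (ltngtP m l) => h; (repeat case: ifP); move=> *; (lia || lra).
Qed.

Lemma telescope x u : yv x u = \sum_(w < n) phi x w * ind (w <= u)%N.
Proof.
suff H : forall k (u : 'I_n), val u = k -> yv x u = \sum_(w < n) phi x w * ind (w <= u)%N.
  exact: H.
elim=> [|k IH] {}u uk.
  rewrite (bigD1 u) //= big1 => [|w wu]; last first.
    rewrite /ind uk leqn0; case: eqP => [w0|]; last by rewrite mulr0.
    by move: wu; rewrite (_ : w = u) ?eqxx //; apply: val_inj => /=; rewrite w0 uk.
  by rewrite /ind leqnn mulr1 addr0 /phi uk /= subr0.
have pk : val (predO u) = k by rewrite /= uk.
have -> : \sum_(w < n) phi x w * ind (w <= u)%N =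
          \sum_(w < n) (phi x w * ind (w <= predO u)%N + phi x w * ind (w == u)).
  apply: eq_bigr => w _; rewrite -mulrDr /ind /= uk.
  have -> : (w == u) = (val w == k.+1) by rewrite -uk.
  rewrite leq_eqVlt ltnS; case: eqP => [->|_] /=.
    by rewrite ltnn add0r.
  by rewrite addr0.
rewrite big_split /= -(IH _ pk) (bigD1 u) //= big1 => [|w /negbTE wu]; last by rewrite /ind wu mulr0.
rewrite /ind eqxx mulr1 addr0 /phi uk /=; lra.
Qed.


Lemma yv_inj x z : (forall u, yv x u = yv z u) -> x = z.
Proof.
move=> h; apply/rowP => i; have [u ->] := posO_surj S i.
have := h u; rewrite /yv /sg /crd; case: (u \in S); lra.
Qed.

Lemma recon x : x = \sum_(l < n) Phi l x *: ee l.
Proof.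
apply: yv_inj => u; rewrite yv_sum.
under eq_bigr do rewrite yvZ yv_ee.
rewrite telescope (reindex_inj rev_ord_inj) /=; apply: eq_bigr => w _.
by [].
Qed.

Lemma Phi_comb (c : 'I_n -> R) m : Phi m (\sum_(l < n) c l *: ee l) = c m.
Proof.
rewrite Phi_sum; under eq_bigr do rewrite PhiZ Phi_ee.
rewrite (bigD1 m) //= big1 => [|l lm]; first by rewrite /ind eqxx mulr1 addr0.
by rewrite /ind eq_sym (negbTE lm) mulr0.
Qed.

Definition Mono x := (forall u, 0 <= yv x u) /\
  (forall u v : 'I_n, (u <= v)%N -> yv x u <= yv x v).

Lemma Pdef (u v : 'I_n) : (posO S u <= posO S v)%N ->
  ((posO S u < #|S|)%N && (posO S v < posO S u + aS S (posO S u))%N) =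
  (u \in S) && (v <= u)%N.
Proof. exact: P_pos. Qed.

Lemma CS_Mono x : CS S x <-> Mono x.
Proof.
split.
  move=> [Wx Hs]; split.
    move=> u; have := Hs (posO S u) (posO S u) (leqnn _).
    rewrite Pdef // leqnn andbT.
    by case uS: (u \in S); rewrite !crd_pos ?uS //; lra.
  move=> u v uv.
  case uS: (u \in S); case vS: (v \in S).
  - have h : (posO S v <= posO S u)%N by rewrite /= pos_leS.
    by have := Wx _ _ h; rewrite !crd_pos ?uS ?vS /=.
  - have h : (posO S u <= posO S v)%N.
      apply: ltnW; apply: (@leq_trans #|S|); first by rewrite cardS_cS pos_ltk.
      by rewrite cardS_cS leqNgt pos_ltk vS.
    have := Hs _ _ h; rewrite Pdef // uS /=.
    case: ifP => vu.
      have e : u = v by apply: val_inj; apply/eqP; rewrite eqn_leq uv vu.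
      by rewrite e vS in uS.
    by rewrite !crd_pos ?uS ?vS /=; lra.
  - have h : (posO S v <= posO S u)%N.
      apply: ltnW; apply: (@leq_trans #|S|); first by rewrite cardS_cS pos_ltk.
      by rewrite cardS_cS leqNgt pos_ltk uS.
    have := Hs _ _ h; rewrite Pdef // vS uv /=.
    by rewrite !crd_pos ?uS ?vS /=; lra.
  - have h : (posO S u <= posO S v)%N by rewrite /= pos_leN ?uS ?vS.
    by have := Wx _ _ h; rewrite !crd_pos ?uS ?vS /=; lra.
move=> [H0 Hm]; split.
  move=> i j; have [u ->] := posO_surj S i; have [v ->] := posO_surj S j => ij.
  case uS: (u \in S); case vS: (v \in S).
  - by rewrite !crd_pos ?uS ?vS /= //; apply: Hm; rewrite -(pos_leS uS vS).
  - rewrite !crd_pos ?uS ?vS /=; have := H0 u; have := H0 v; lra.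
  - exfalso; move: ij; rewrite /= leqNgt; apply/negP/negPn.
    apply: (@leq_trans #|S|); first by rewrite cardS_cS pos_ltk.
    by rewrite cardS_cS leqNgt pos_ltk uS.
  - rewrite !crd_pos ?uS ?vS /=; have := Hm u v; rewrite -(pos_leN (negbT uS) (negbT vS)).
    move=> /(_ ij); lra.
move=> i j; have [u ->] := posO_surj S i; have [v ->] := posO_surj S j => ij.
rewrite Pdef //.
case uS: (u \in S) => /=.
  case: ifP => vu.
    have := Hm _ _ vu; have := H0 v; rewrite !crd_pos uS.
    by case vS: (v \in S); lra.
  case vS: (v \in S).
    by move: ij; rewrite /= (pos_leS uS vS) vu.
  have := Hm u v; rewrite !crd_pos ?uS ?vS /=.
  by move: vu => /negbT; rewrite -ltnNge => /ltnW vu /(_ vu); lra.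
case vS: (v \in S).
  exfalso; move: ij; rewrite /= leqNgt; apply/negP/negPn.
  apply: (@leq_trans #|S|); first by rewrite cardS_cS pos_ltk.
  by rewrite cardS_cS leqNgt pos_ltk uS.
rewrite !crd_pos ?uS ?vS /=; have := H0 u; have := H0 v; lra.
Qed.


Lemma Phi_rev w x : Phi (rev_ord w) x = phi x w.
Proof. by rewrite /Phi rev_ordK. Qed.

Lemma ind_ge0 b : 0 <= ind b.
Proof. by rewrite /ind; case: b. Qed.

Lemma Mono_Phi x : Mono x <-> (forall l, 0 <= Phi l x).
Proof.
split.
  move=> [H0 Hm] l; rewrite /Phi /phi; case: ifP => _; last by rewrite subr0.
  by rewrite subr_ge0; apply: Hm; exact: leq_pred.
move=> H; have hp w : 0 <= phi x w by rewrite -Phi_rev.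
split.
  by move=> u; rewrite telescope; apply: sumr_ge0 => w _; exact: mulr_ge0 (hp w) (ind_ge0 _).
move=> u v uv; rewrite !telescope; apply: ler_sum => w _.
apply: ler_wpM2l => //; rewrite /ind; case: ifP => wu; case: ifP => wv; rewrite ?lexx ?ler01 //.
by rewrite (leq_trans wu uv) in wv.
Qed.

Lemma CS_Phi x : CS S x <-> (forall l, 0 <= Phi l x).
Proof. by rewrite -Mono_Phi; exact: CS_Mono. Qed.

Definition SMono x := (forall u, 0 < yv x u) /\
  (forall u v : 'I_n, (u < v)%N -> yv x u < yv x v).

Lemma Phi_SMono x : (forall l, 0 < Phi l x) -> SMono x.
Proof.
move=> H; have hp w : 0 < phi x w by rewrite -Phi_rev.
have hp' w : 0 <= phi x w by exact: ltW.
split.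
  move=> u; rewrite telescope (bigD1 u) //= /ind leqnn mulr1.
  have : 0 <= \sum_(i < n | i != u) phi x i * (if (i <= u)%N then 1 else 0).
    by apply: sumr_ge0 => w _; apply: mulr_ge0 => //; case: ifP.
  have := hp u; lra.
move=> u v uv; rewrite !telescope (bigD1 v) //= [X in _ < X](bigD1 v) //=.
rewrite /ind leqnn (leqNgt v u) uv /= mulr1 mulr0 add0r.
have : \sum_(i < n | i != v) phi x i * (if (i <= u)%N then 1 else 0) <=
       \sum_(i < n | i != v) phi x i * (if (i <= v)%N then 1 else 0).
  apply: ler_sum => w _; apply: ler_wpM2l => //; case: ifP => wu; case: ifP => wv; rewrite ?lexx ?ler01 //.
  by rewrite (leq_trans wu (ltnW uv)) in wv.
have := hp v; lra.
Qed.

Lemma SMono_W0c x : SMono x -> W0_compl x.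
Proof.
move=> [H0 Hm].
have posk u v : u \in S -> v \notin S -> (posO S u < posO S v)%N.
  move=> uS vS; apply: (@leq_trans #|S|); first by rewrite cardS_cS pos_ltk.
  by rewrite cardS_cS leqNgt pos_ltk (negbTE vS).
have neq u v : u != v -> yv x u != yv x v.
  move=> uv; case: (ltngtP u v) => [h|h|/val_inj e]; last by rewrite e eqxx in uv.
  - by have := Hm _ _ h; rewrite lt_neqAle => /andP[].
  - by have := Hm _ _ h; rewrite lt_neqAle eq_sym => /andP[].
split.
  move=> i j; have [u ->] := posO_surj S i; have [v ->] := posO_surj S j => ij.
  rewrite !crd_pos.
  case uS: (u \in S); case vS: (v \in S).
  - apply: Hm; move: ij; rewrite /= ltnNge (pos_leS vS uS) -ltnNge //.
  - have := H0 u; have := H0 v; lra.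
  - by exfalso; have := posk v u (idP vS) (negbT uS); rewrite ltnNge (ltnW ij).
  - rewrite ltrN2; apply: Hm; move: ij.
    by rewrite /= ltnNge (pos_leN (negbT vS) (negbT uS)) -ltnNge.
move=> [i [j [_]]]; rewrite /lam_perp /=.
have [u ->] := posO_surj S i; have [v ->] := posO_surj S j.
rewrite !crd_pos.
have huv : (u \in S) != (v \in S) -> yv x u != yv x v.
  by move=> h; apply: neq; apply: contraNneq h => ->.
case uS: (u \in S); case vS: (v \in S); rewrite ?uS ?vS /= in huv.
- have := H0 u; have := H0 v; lra.
- by move/eqP; rewrite subr_eq0 (negbTE (huv isT)).
- move/eqP; rewrite addrC subr_eq0 eq_sym (negbTE (huv isT)) //.
- have := H0 u; have := H0 v; lra.
Qed.

Lemma W0c_facts (x : vec) : W0_compl x ->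
  (forall a b : 'I_n, a != b -> crd x a != crd x b) /\
  (forall a b : 'I_n, crd x a + crd x b != 0).
Proof.
move=> [W0x NA]; split.
  move=> a b ab; case: (ltngtP a b) => [h|h|/val_inj e]; last by rewrite e eqxx in ab.
  - by have := W0x _ _ h; rewrite lt_neqAle eq_sym => /andP[].
  - by have := W0x _ _ h; rewrite lt_neqAle => /andP[].
move=> a b; apply/eqP => e; apply: NA.
case: (leqP a b) => h; first by exists a, b.
by exists b, a; split; [exact: ltnW | rewrite /lam_perp /= addrC].
Qed.

Lemma W0c_Phi_neq0 x l : W0_compl x -> Phi l x != 0.
Proof.
move=> /W0c_facts [D A]; rewrite /Phi /phi.
set w := rev_ord l.
case: ifP => w0.
  have hne : posO S w != posO S (predO w).
    apply/negP => /eqP /pos_inj /(congr1 val) /= h; move: w0; rewrite /w /=; lia.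
  have := D _ _ hne; have := A (posO S w) (posO S (predO w)).
  rewrite /yv /sg; case: (w \in S); case: (predO w \in S);
    rewrite ?mul1r ?mulN1r => h1 h2; apply/eqP => e.
  - by move/eqP: h2; apply; lra.
  - by move/eqP: h1; apply; lra.
  - by move/eqP: h1; apply; lra.
  - by move/eqP: h2; apply; lra.
rewrite subr0 /yv /sg; have := A (posO S w) (posO S w).
case: (w \in S); rewrite ?mul1r ?mulN1r => h; apply/eqP => e.
- by move/eqP: h; apply; lra.
- by move/eqP: h; apply; lra.
Qed.

Lemma CS_W0c_Phi x : CS S x -> W0_compl x -> forall l, 0 < Phi l x.
Proof.
move=> /CS_Phi h hw l; rewrite lt_neqAle eq_sym (W0c_Phi_neq0 l hw) /=; exact: h.
Qed.


Lemma CS_cone : CS S = [set x | exists c : 'I_n -> R,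
   (forall l, 0 <= c l) /\ x = \sum_(l < n) c l *: ee l].
Proof.
apply/seteqP; split => x.
  by move=> /CS_Phi h; exists (fun l => Phi l x); split => //; exact: recon.
by move=> [c [c0 ->]]; apply/CS_Phi => l; rewrite Phi_comb.
Qed.

Lemma ee_indep (c : 'I_n -> R) : \sum_(l < n) c l *: ee l = 0 -> forall l, c l = 0.
Proof. by move=> h l; rewrite -(Phi_comb c l) h Phi0. Qed.

Lemma CS0 : CS S (0 : vec).
Proof. by apply/CS_Phi => l; rewrite Phi0. Qed.

Lemma CSZ (t : R) (x : vec) : 0 <= t -> CS S x -> CS S (t *: x).
Proof. by move=> t0 /CS_Phi h; apply/CS_Phi => l; rewrite PhiZ mulr_ge0. Qed.

Lemma CS_ee l : CS S (ee l).
Proof. by apply/CS_Phi => m; rewrite Phi_ee ind_ge0. Qed.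

Lemma ee_neq0 l : ee l != 0.
Proof.
apply/eqP => e; have := Phi_ee l l; rewrite e Phi0 /ind eqxx => /eqP.
by rewrite eq_sym oner_eq0.
Qed.

Lemma dotvD (f x z : vec) : dotv f (x + z) = dotv f x + dotv f z.
Proof. by rewrite /dotv -big_split; apply: eq_bigr => i _; rewrite /crd mxE mulrDr. Qed.

Lemma dotvZ (f : vec) (t : R) (x : vec) : dotv f (t *: x) = t * dotv f x.
Proof. by rewrite /dotv mulr_sumr; apply: eq_bigr => i _; rewrite /crd mxE mulrCA. Qed.

Lemma dotv0 (f : vec) : dotv f 0 = 0.
Proof. by have := dotvZ f 0 0; rewrite scale0r mul0r. Qed.

Lemma dotv0l (x : vec) : dotv 0 x = 0.
Proof. by rewrite /dotv big1 // => i _; rewrite /crd mxE mul0r. Qed.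

Lemma dotv_sum (f : vec) (I : finType) (F : I -> vec) :
  dotv f (\sum_i F i) = \sum_i dotv f (F i).
Proof. exact: (big_morph (dotv f) (dotvD f) (dotv0 f)). Qed.

Definition delta (i : 'I_n) : vec := \row_j ind (j == i).

Lemma x_decomp (x : vec) : x = \sum_i crd x i *: delta i.
Proof.
apply/rowP => j; rewrite summxE (bigD1 j) //= big1 => [|i ij].
  by rewrite !mxE /ind eqxx mulr1 addr0.
by rewrite !mxE /ind eq_sym (negbTE ij) mulr0.
Qed.

Definition Lf l (x : vec) : R := - \sum_(m | m != l) Phi m x.

Lemma LfD l x z : Lf l (x + z) = Lf l x + Lf l z.
Proof.
rewrite /Lf -opprD -big_split; congr (- _); apply: eq_bigr => m _; exact: PhiD.
Qed.

Lemma LfZ l t x : Lf l (t *: x) = t * Lf l x.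
Proof.
rewrite /Lf mulrN mulr_sumr; congr (- _); apply: eq_bigr => m _; exact: PhiZ.
Qed.

Lemma Lf0 l : Lf l 0 = 0.
Proof. by have := LfZ l 0 0; rewrite scale0r mul0r. Qed.

Definition gf l : vec := \row_i Lf l (delta i).

Lemma dotv_gf l x : dotv (gf l) x = Lf l x.
Proof.
rewrite [in RHS](x_decomp x) (big_morph (Lf l) (LfD l) (Lf0 l)).
by apply: eq_bigr => i _; rewrite LfZ /crd mxE mulrC.
Qed.

Lemma ray_eq l : ray (ee l) = [set x | CS S x /\ Lf l x = 0].
Proof.
apply/seteqP; split => x.
  move=> [t t0 <-]; split; first exact: CSZ (CS_ee l).
  rewrite /Lf big1 ?oppr0 // => m ml; rewrite PhiZ Phi_ee /ind (negbTE ml) mulr0 //.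
move=> [/CS_Phi h]; rewrite /Lf => /eqP; rewrite oppr_eq0 => /eqP hs.
have z m : m != l -> Phi m x = 0 by move=> ml; exact: (psumr_eq0P (fun m _ => h m) hs).
exists (Phi l x); first exact: h.
rewrite [RHS]recon (bigD1 l) //= big1 ?addr0 // => m ml; by rewrite z // scale0r.
Qed.


Lemma dotv_comb (g : vec) (c : 'I_n -> R) :
  dotv g (\sum_(l < n) c l *: ee l) = \sum_(l < n) c l * dotv g (ee l).
Proof. by rewrite dotv_sum; apply: eq_bigr => l _; rewrite dotvZ. Qed.

Lemma face_half (g : vec) (F : set vec) :
  (forall x, CS S x -> dotv g x <= 0) ->
  F = [set x | CS S x /\ dotv g x = 0] -> is_halfline F ->
  exists l, F = ray (ee l).
Proof.
move=> gle HF [p [v [v0 Hh]]].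
have dle l : dotv g (ee l) <= 0 by apply: gle; exact: CS_ee.
have key x m : F x -> Phi m x * dotv g (ee m) = 0.
  rewrite HF => -[/CS_Phi h]; rewrite [in X in X -> _](recon x) dotv_comb => hs.
  have hs' : \sum_(l < n) - (Phi l x * dotv g (ee l)) = 0 by rewrite sumrN hs oppr0.
  have : - (Phi m x * dotv g (ee m)) = 0.
    apply: (psumr_eq0P _ hs') => // l _; rewrite oppr_ge0; exact: mulr_ge0_le0.
  by move/eqP; rewrite oppr_eq0 => /eqP.
have F0 : F 0 by rewrite HF; split; [exact: CS0 | exact: dotv0].
have mult x : F x -> exists s, x = s *: v.
  have [r _ hr] : [set p + t *: v | t in [set t : R | 0 <= t]] 0 by rewrite -Hh.
  rewrite Hh => -[t _ <-]; exists (t - r); rewrite scalerBl.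
  by move: hr => /eqP; rewrite addr_eq0 => /eqP ->; rewrite addrC.
have Fp : F p by rewrite Hh; exists 0; rewrite ?scale0r ?addr0 /=.
have Fpv : F (p + v) by rewrite Hh; exists 1; rewrite ?scale1r /= ?ler01.
have [x1 [Fx1 x10]] : exists x1, F x1 /\ x1 != 0.
  case: (eqVneq p 0) => [p0|pn0]; last by exists p.
  by exists (p + v); split => //; rewrite p0 add0r.
have [l Pl] : exists l, Phi l x1 != 0.
  apply/not_existsP => hall; move/eqP: x10; apply.
  rewrite (recon x1) big1 // => l _.
  by have /negP := hall l; rewrite negbK => /eqP ->; rewrite scale0r.
have dl : dotv g (ee l) = 0.
  by have /eqP := key x1 l Fx1; rewrite mulf_eq0 (negbTE Pl) /= => /eqP.
have Fee : F (ee l) by rewrite HF; split; [exact: CS_ee | exact: dl].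
exists l; rewrite (ray_eq l) HF; apply/seteqP; split => x [Kx].
  move=> gx; split => //.
  have Fx : F x by rewrite HF.
  have hz m : m != l -> Phi m x = 0.
    move=> ml; case: (eqVneq (dotv g (ee m)) 0) => dm; last first.
      by have /eqP := key x m Fx; rewrite mulf_eq0 (negbTE dm) orbF => /eqP.
    exfalso.
    have Fem : F (ee m) by rewrite HF; split; [exact: CS_ee | exact: dm].
    have [sm em] := mult _ Fem; have [sl el] := mult _ Fee.
    have h1 := Phi_ee m m; have h2 := Phi_ee l m.
    rewrite em PhiZ /ind eqxx in h1; rewrite el PhiZ /ind (negbTE ml) in h2.
    have : Phi m v != 0 by apply/eqP => e; rewrite e mulr0 in h1; move/eqP: h1; rewrite eq_sym oner_eq0.
    move=> hv; move/eqP: h2; rewrite mulf_eq0 (negbTE hv) orbF => /eqP sl0.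
    by have := ee_neq0 l; rewrite el sl0 scale0r eqxx.
  rewrite /Lf big1 ?oppr0 // => m ml; exact: hz.
move=> hL; split => //.
move/CS_Phi: Kx => h; move/eqP: hL; rewrite /Lf oppr_eq0 => /eqP hs.
have z m : m != l -> Phi m x = 0 by move=> ml; exact: (psumr_eq0P (fun m _ => h m) hs).
rewrite (recon x) dotv_comb (bigD1 l) //= big1 ?addr0; first by rewrite dl mulr0.
by move=> m ml; rewrite z // mul0r.
Qed.

Lemma extreme_iff (F : set vec) :
  extreme_ray (CS S) F <-> exists l : 'I_n, F = ray (ee l).
Proof.
split.
  move=> [[FK|[f [c [[f0 [fle [x0 [Kx0 fx0]]]] FE]]]] Hh].
    apply: (@face_half 0) => //; first by move=> x _; rewrite dotv0l.
    by rewrite FK; apply/seteqP; split => x; [move=> Kx; split => //; rewrite dotv0l | case].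
  have c0 : c = 0.
    apply/eqP; rewrite eq_le; apply/andP; split; last by rewrite -(dotv0 f); apply: fle; exact: CS0.
    have := fle _ (CSZ (ler0n _ 2) Kx0); rewrite dotvZ fx0; lra.
  by apply: (@face_half f) => //; [move=> x /fle; rewrite c0 | rewrite FE c0].
move=> [l ->]; split; last first.
  exists 0, (ee l); split; first exact: ee_neq0.
  by apply/seteqP; split => x [t t0 <-]; exists t => //; rewrite add0r.
case: (pselect (exists m : 'I_n, m != l)) => [[m ml]|hno].
  right; exists (gf l), 0; split.
    split.
      apply/eqP => e; have := dotv_gf l (ee m); rewrite e dotv0l /Lf.
      rewrite (bigD1 m) //= Phi_ee eqxx big1 => [|m' /andP[_ m'm]]; last by rewrite Phi_ee /ind (negbTE m'm).
      rewrite /ind addr0 => /eqP; rewrite eq_sym oppr_eq0 oner_eq0 //.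
    split.
      move=> x /CS_Phi h; rewrite dotv_gf /Lf oppr_le0; apply: sumr_ge0 => m' _; exact: h.
    by exists 0; split; [exact: CS0 | exact: dotv0].
  rewrite ray_eq; apply/seteqP; split => x [Kx hx]; split => //=.
    by rewrite dotv_gf.
  by move: hx => /=; rewrite dotv_gf.
left; rewrite ray_eq; apply/seteqP; split => x; first by case.
move=> Kx; split => //; rewrite /Lf big1 ?oppr0 // => m ml; exfalso; apply: hno; by exists m.
Qed.


Lemma yv_cont u : continuous (fun x : vec => yv x u).
Proof.
move=> x; rewrite /yv /crd.
apply: (continuousM (s := fun=> sg u) (t := fun x : vec => x ord0 (posO S u))).
  exact: cst_continuous.
exact: coord_continuous.
Qed.

Lemma Phi_cont l : continuous (Phi l).
Proof.
move=> x; rewrite /Phi /phi; case: (0 < rev_ord l)%N.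
  by apply: (continuousB (f := fun x => yv x (rev_ord l)) (g := fun x => yv x (predO (rev_ord l)))); apply: yv_cont.
by apply: (continuousB (f := fun x => yv x (rev_ord l)) (g := fun x => 0)); [apply: yv_cont | apply: cst_continuous].
Qed.

Lemma open_Phi l : open [set x : vec | 0 < Phi l x].
Proof. by apply: (@open_comp _ _ (Phi l) [set r | 0 < r]); [move=> x _; exact: Phi_cont | exact: open_gt]. Qed.

Lemma closed_Phi l : closed [set x : vec | 0 <= Phi l x].
Proof. by apply: (@preimage_closed _ _ (Phi l) [set r | 0 <= r]); [move=> x _; exact: Phi_cont | exact: closed_ge]. Qed.

Lemma closed_CS : closed (@CS R n S).
Proof.
have -> : @CS R n S = \bigcap_(l in setT) [set x : vec | 0 <= Phi l x].
  apply/seteqP; split => x.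
    by move=> /CS_Phi h l _; exact: h.
  by move=> h; apply/CS_Phi => l; exact: h.
by apply: closed_bigI => l _; exact: closed_Phi.
Qed.

Definition OS : set vec := [set x | forall l, 0 < Phi l x].

Lemma OS_W0c x : OS x -> W0_compl x.
Proof. by move=> h; apply: SMono_W0c; exact: Phi_SMono. Qed.

Lemma OS_CS x : OS x -> CS S x.
Proof. by move=> h; apply/CS_Phi => l; exact: ltW. Qed.

Lemma W0c_CS_OS x : W0_compl x -> CS S x -> OS x.
Proof. by move=> hw hc l; exact: CS_W0c_Phi. Qed.

Definition z0 : vec := \sum_(l < n) 1 *: ee l.

Lemma OS_z0 : OS z0.
Proof. by move=> l; rewrite /z0 Phi_comb ltr01. Qed.

Lemma seg_cont (x z : vec) : continuous (fun t : R => x + t *: (z - x)).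
Proof.
move=> t; apply: (continuousD (f := fun=> x) (g := fun t : R => t *: (z - x))).
  exact: cst_continuous.
by apply: continuousZr_tmp.
Qed.

Lemma comp_OS x : OS x -> connected_component (@W0_compl R n) x = OS.
Proof.
move=> Ox; apply/seteqP; split; last first.
  move=> z Oz.
  set A := (fun t : R => x + t *: (z - x)) @` `[0, 1]%classic.
  have cA : connected A.
    apply: connected_continuous_connected; first exact: segment_connected.
    apply: continuous_subspaceT; exact: seg_cont.
  have AO : A `<=` OS.
    move=> y0 [t]; rewrite /= in_itv /= => /andP[t0 t1] <- l.
    have PhiN y : Phi l (- y) = - Phi l y by rewrite -scaleN1r PhiZ mulN1r.
    rewrite PhiD PhiZ PhiD PhiN.
    have h1 := Ox l; have h2 := Oz l; nra.
  have Ax : A x by exists 0; rewrite ?scale0r ?addr0 //= in_itv /= lexx ler01.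
  have Az : A z by exists 1; rewrite ?scale1r /= ?in_itv /= ?lexx ?ler01 //; rewrite addrC subrK.
  apply: (connected_component_max Ax) => //.
  by move=> y /AO; exact: OS_W0c.
move=> z Cz l.
set C := connected_component (@W0_compl R n) x.
have Cx : C x by apply: connected_component_refl; exact: OS_W0c.
have CW : C `<=` @W0_compl R n by exact: connected_component_sub.
have := @component_connected _ (@W0_compl R n) x (C `&` [set y | 0 < Phi l y]).
move=> /(_ _ _ _) h.
have : (C `&` [set y | 0 < Phi l y]) z.
  rewrite h //.
  - by exists x; split => //; exact: Ox.
  - by exists [set y | 0 < Phi l y] => //; exact: open_Phi.
  exists [set y | 0 <= Phi l y]; first exact: closed_Phi.
  apply/seteqP; split => y [Cy hy]; split => //=; first exact: ltW.
  by rewrite lt_neqAle eq_sym W0c_Phi_neq0 //; exact: CW.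
by case.
Qed.

Lemma closure_OS : closure OS = CS S.
Proof.
apply/seteqP; split.
  move=> y hy; apply: closed_CS; apply: (closureS _ hy); exact: OS_CS.
move=> y Ky B hB.
pose f := fun t : R => y + t *: z0.
have f0 : f 0 = y by rewrite /f scale0r addr0.
have : nbhs (0 : R) (f @^-1` B).
  have := @seg_cont y (y + z0) 0; rewrite /continuous_at.
  have -> : (fun t : R => y + t *: (y + z0 - y)) = f by apply: funext => t; rewrite /f (addrC y z0) addrK.
  by rewrite scale0r addr0 => h; exact: h B hB.
move=> /nbhs_ballP [e /= e0 he].
have hb : ball (0 : R) e (e / 2).
  by rewrite -ball_normE /= sub0r normrN ger0_norm ?divr_ge0 ?ltW //; lra.
exists (f (e / 2)); split; last exact: he.
move=> l; rewrite /f PhiD PhiZ /z0 Phi_comb mulr1.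
have := (CS_Phi y).1 Ky l; lra.
Qed.

End Geo.

Lemma Pc_sign (R : realType) n (S : {set 'I_n}) (x : 'rV[R]_n) (i j : 'I_n) :
  OS S x -> (i <= j)%N -> Pc S i j = (0 < crd x i + crd x j).
Proof.
move=> Ox ij; have [_ /(_ i j ij)] := OS_CS Ox.
have [_ A] := W0c_facts (OS_W0c Ox).
rewrite /Pc; case: ifP => _ h.
  by rewrite lt_neqAle eq_sym A h.
by apply/esym/negbTE; rewrite -leNgt.
Qed.

Lemma count_int (i m N : nat) : (i <= m <= N)%N ->
  count (fun a => (i <= a < m)%N) (iota 0 N) = (m - i)%N.
Proof.
move=> /andP[im mN].
have -> : iota 0 N = iota 0 i ++ iota i (m - i) ++ iota m (N - m).
  have e1 : N = (i + ((m - i) + (N - m)))%N by lia.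
  by rewrite {1}e1 !iotaD add0n subnKC.
rewrite !count_cat (@eq_in_count _ _ pred0); last first.
  by move=> a; rewrite mem_iota /= add0n => h; rewrite leqNgt h.
rewrite (@eq_in_count _ _ pred0 (iota m _)); last first.
  by move=> a; rewrite mem_iota => /andP[h _]; rewrite /= ltnNge h andbF.
rewrite (@eq_in_count _ _ predT (iota i _)); last first.
  by move=> a; rewrite mem_iota subnKC // => /andP[h1 h2]; rewrite /= h1 h2.
by rewrite !count_pred0 count_predT size_iota addn0.
Qed.

Lemma seg (q : pred nat) (i N : nat) :
  (forall a, q a -> i <= a < N)%N ->
  (forall a b, i <= a -> a <= b -> q b -> q a)%N ->
  forall a, q a = (i <= a < i + count q (iota 0 N))%N.
Proof.
move=> hq hd.
have ex : exists m, (i <= m)%N && ~~ q m.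
  exists (maxn i N); rewrite leq_maxl /=; apply/negP => /hq /andP[_].
  by rewrite ltnNge leq_maxr.
pose m := ex_minn ex.
have [hm1 hm2] : (i <= m)%N /\ ~~ q m by rewrite /m; case: ex_minnP => m0 /andP[].
have hmin : forall a, (i <= a)%N -> ~~ q a -> (m <= a)%N.
  by move=> a h1 h2; rewrite /m; case: ex_minnP => m0 _; apply; rewrite h1.
have qeq : forall a, q a = (i <= a < m)%N.
  move=> a; apply/idP/idP.
    move=> qa; have /andP[ia an] := hq _ qa; rewrite ia /= ltnNge; apply/negP => ma.
    by move: hm2; rewrite (hd m a) // ia.
  move=> /andP[ia am]; apply/negPn/negP => nqa.
  by have := hmin _ ia nqa; rewrite leqNgt am.
case: (leqP i N) => iN; last first.
  have q0 a : q a = false by apply/negP => /hq; move: iN; lia.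
  move=> a; rewrite q0 (eq_count q0) count_pred0 addn0; lia.
have mN : (m <= N)%N.
  apply: hmin => //; apply/negP => /hq /andP[_]; by rewrite ltnn.
move=> a; rewrite (eq_count qeq) count_int ?hm1 ?mN // subnKC //; exact: qeq.
Qed.

Section Constr.
Variables (R : realType) (n : nat) (x : 'rV[R]_n).

Definition xn (a : nat) : R := \sum_(j < n | val j == a) crd x j.

Lemma xnE (j : 'I_n) : xn j = crd x j.
Proof. by rewrite /xn (big_pred1 j) // => j'; rewrite /= val_eqE. Qed.

Lemma xn_mono : W0 x -> forall a b, (a < b < n)%N -> xn b < xn a.
Proof.
move=> Wx a b /andP[ab bn].
have an : (a < n)%N by exact: ltn_trans ab bn.
by rewrite -[a]/(val (Ordinal an)) -[b]/(val (Ordinal bn)) !xnE; apply: Wx.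
Qed.

Lemma xn_monoW : W0 x -> forall a b, (a <= b < n)%N -> xn b <= xn a.
Proof.
move=> Wx a b /andP[]; rewrite leq_eqVlt => /orP[/eqP -> //|ab bn].
by apply: ltW; apply: xn_mono => //; rewrite ab.
Qed.

Definition q0 (a : nat) : bool := (a < n)%N && (0 < xn a).
Definition kk : nat := count q0 (iota 0 n).
Definition qi (i a : nat) : bool := [&& (a < n)%N, (i <= a)%N & 0 < xn i + xn a].
Definition av (i : nat) : nat := count (qi i) (iota 0 n).

Lemma q0E : W0 x -> forall a, q0 a = (a < kk)%N.
Proof.
move=> Wx a; rewrite (@seg q0 0 n) ?add0n //.
  by move=> b /andP[].
move=> b c _ bc /andP[cn hc]; rewrite /q0 (leq_ltn_trans bc cn) /=.
by apply: (lt_le_trans hc); apply: (xn_monoW Wx); rewrite bc cn.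
Qed.

Lemma kn : (kk <= n)%N.
Proof. by rewrite /kk (leq_trans (count_size _ _)) // size_iota. Qed.

Lemma qiE : W0 x -> forall i, (i < kk)%N -> forall a, qi i a = (i <= a < i + av i)%N.
Proof.
move=> Wx i ik a; rewrite (@seg (qi i) i n) //.
  by move=> b /and3P[-> -> _].
move=> b c ib bc /and3P[cn ic hc]; rewrite /qi (leq_ltn_trans bc cn) ib /=.
apply: (lt_le_trans hc); rewrite lerD2l; apply: (xn_monoW Wx); by rewrite bc cn.
Qed.

Lemma xn_pos : W0 x -> forall i, (i < kk)%N -> 0 < xn i.
Proof. by move=> Wx i; rewrite -q0E // => /andP[]. Qed.

Lemma av_ge1 : W0 x -> forall i, (i < kk)%N -> (1 <= av i)%N.
Proof.
move=> Wx i ik; have : qi i i.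
  rewrite /qi leqnn (leq_trans ik kn) /=; have := xn_pos Wx ik; lra.
by rewrite qiE // leqnn /= -[X in (X < _)%N]addn0 ltn_add2l.
Qed.

Lemma av_le : W0 x -> forall i, (i < kk)%N -> (i + av i <= n)%N.
Proof.
move=> Wx i ik; have h1 := av_ge1 Wx ik.
have : qi i (i + av i).-1 by rewrite qiE //; apply/andP; split; lia.
by move=> /and3P[h _ _]; lia.
Qed.

Lemma av_dec : W0 x -> forall i j, (i < j < kk)%N -> (av j < av i)%N.
Proof.
move=> Wx i j /andP[ij jk]; have ik := ltn_trans ij jk.
have h1 := av_ge1 Wx jk.
have : qi j (j + av j).-1 by rewrite qiE //; apply/andP; split; lia.
move=> /and3P[h2 h3 h4].
have : qi i (j + av j).-1.
  rewrite /qi h2 /=; apply/andP; split; first lia.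
  apply: (lt_le_trans h4); rewrite lerD2r; apply: (xn_monoW Wx).
  by rewrite (ltnW ij) (leq_trans jk kn).
by rewrite qiE // => /andP[_ h]; lia.
Qed.


Definition SS : {set 'I_n} := [set s : 'I_n | has (fun i => av i == (val s).+1) (iota 0 kk)].
Definition LL : seq nat := map av (iota 0 kk).

Lemma LL_sorted : W0 x -> sorted gtn LL.
Proof.
move=> Wx; rewrite /LL.
have : forall m len, (m + len <= kk)%N -> sorted gtn (map av (iota m len)).
  move=> m len; elim: len m => [//|len IH] m hm /=.
  case: len IH hm => [//|len] IH hm /=.
  rewrite -/(map av (iota m.+1 len.+1)) -/(sorted gtn _).
  have -> : path gtn (av m.+1) (map av (iota m.+2 len)) = sorted gtn (map av (iota m.+1 len.+1)) by [].
  rewrite IH ?andbT; last lia.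
  apply: (av_dec Wx); apply/andP; split => //; lia.
by move=> /(_ 0 kk); apply; rewrite add0n.
Qed.

Lemma LL_uniq : W0 x -> uniq LL.
Proof. by move=> Wx; have := LL_sorted Wx; rewrite gtn_sorted_uniq_geq => /andP[]. Qed.

Lemma LL_geq : W0 x -> sorted geq LL.
Proof. by move=> Wx; have := LL_sorted Wx; rewrite gtn_sorted_uniq_geq => /andP[]. Qed.

Lemma desc_SS : W0 x -> desc SS = LL.
Proof.
move=> Wx; rewrite /desc.
have hp : perm_eq [seq (val i).+1 | i <- enum SS] LL.
  apply: uniq_perm.
  - by rewrite map_inj_uniq ?enum_uniq // => a b /= [] /val_inj.
  - exact: LL_uniq.
  move=> z; apply/mapP/mapP => [[s]|[i]].
    rewrite mem_enum inE => /hasP [i ii /eqP hi] ->; by exists i.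
  rewrite mem_iota add0n => /andP[_ ik] ->.
  have h1 := av_ge1 Wx ik; have h2 := av_le Wx ik.
  have hn : ((av i).-1 < n)%N by lia.
  exists (Ordinal hn); last by rewrite /= prednK //.
  rewrite mem_enum inE; apply/hasP; exists i; first by rewrite mem_iota add0n.
  by rewrite /= prednK.
rewrite (perm_sortP _ _ _ _ _ hp).
- apply: sorted_sort; last exact: LL_geq.
  by move=> a b c h1 h2; exact: leq_trans h2 h1.
- by move=> a b; exact: leq_total.
- by move=> a b c h1 h2; exact: leq_trans h2 h1.
- by move=> a b /andP[h1 h2]; apply/anti_leq/andP; split.
Qed.

Lemma card_SS : W0 x -> #|SS| = kk.
Proof.
move=> Wx; have := congr1 size (desc_SS Wx).
by rewrite /desc size_sort size_map -cardE /LL size_map size_iota.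
Qed.

Lemma aS_SS : W0 x -> forall i, (i < kk)%N -> aS SS i = av i.
Proof.
move=> Wx i ik; rewrite /aS desc_SS // /LL (nth_map 0) ?size_iota //.
by rewrite nth_iota.
Qed.

Lemma CS_SS : W0 x -> CS SS x.
Proof.
move=> Wx; split.
  move=> i j; rewrite leq_eqVlt => /orP[/eqP /val_inj -> //|ij].
  exact/ltW/Wx.
move=> i j ij; rewrite card_SS //.
case: (ltnP i kk) => ik /=.
  rewrite aS_SS //.
  have -> : (j < i + av i)%N = qi i j by rewrite qiE // ij.
  rewrite /qi ltn_ord ij /= !xnE.
  by case: ifP => [/ltW //|/negbT]; rewrite -leNgt.
have : ~~ q0 i by rewrite q0E // -leqNgt.
rewrite /q0 ltn_ord /= -leNgt xnE => hi.
have : crd x j <= crd x i.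
  move: ij; rewrite leq_eqVlt => /orP[/eqP /val_inj -> //|ij].
  exact/ltW/Wx.
lra.
Qed.

End Constr.

Unset Implicit Arguments.

Theorem theorem1p16 (R : realType) (n : nat) :
  (* (a) S |-> C(S) is a bijection from subsets of [n] onto the chambers *)
  ((forall S : {set 'I_n}, is_chamber (@CS R n S)) /\
   injective (@CS R n) /\
   (forall K : set 'rV[R]_n, is_chamber K -> exists S, K = @CS R n S)) /\
  (* (b) extreme rays and non-negative spanning *)
  (forall S : {set 'I_n},
     (forall F : set 'rV[R]_n,
        extreme_ray (@CS R n S) F <-> exists l : 'I_n, F = ray (@eS R n S l.+1)) /\
     (@CS R n S = [set x | exists c : 'I_n -> R,
                     (forall l, 0 <= c l) /\ x = \sum_(l < n) c l *: @eS R n S l.+1]) /\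
     (* simplicial: the generators e_1^S,...,e_n^S are linearly independent *)
     (forall c : 'I_n -> R, \sum_(l < n) c l *: @eS R n S l.+1 = 0 -> forall l, c l = 0)).
Proof.
split; last first.
  move=> S; split; first exact: extreme_iff.
  split; first exact: CS_cone.
  exact: ee_indep.
split.
  move=> S; exists (z0 R S); first exact/OS_W0c/OS_z0.
  by rewrite (comp_OS (OS_z0 R S)) closure_OS.
split.
  move=> S1 S2 e.
  have O1 := OS_z0 R S1.
  have O2 : OS S2 (z0 R S1).
    apply: W0c_CS_OS; first exact: OS_W0c O1.
    by rewrite -e; exact: OS_CS.
  apply: Pc_inj => i j ij; by rewrite (Pc_sign O1 ij) (Pc_sign O2 ij).
move=> K [x Wx ->].
have Ox : OS (SS x) x by apply: W0c_CS_OS => //; exact: CS_SS (Wx.1).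
by exists (SS x); rewrite (comp_OS Ox) closure_OS.
Qed.
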